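(* For every integer $n\geq 1$ let $a_n=\sqrt[n+1]{(n+1)!}-\sqrt[n]{n!}$. Then the sequence $(a_n)_{n\geq1}$ is strictly decreasing, i.e. $a_{n+1}<a_n$ for every integer $n\geq 1$.
   Context: The sequence $a_n$ is called the Lalescu sequence. *)

(* Defs.v *)
From Stdlib Require Import Reals Lra Lia Factorial.
Open Scope R_scope.

(* n-th root of a positive real x: x^(1/n) via Rpower (x > 0 here since k! >= 1). *)
Definition nth_root (n : nat) (x : R) : R := Rpower x (/ INR n).

Definition lalescu (n : nat) : R :=
  nth_root (S n) (INR (fact (S n))) - nth_root n (INR (fact n)).

(* Main.v *)
Require Import Defs.
From Stdlib Require Import Reals Lra Lia Factorial.
From Coquelicot Require Import Coquelicot.
Open Scope R_scope.

Lemma mono0 (f df : R -> R) (x : R) : 0 <= x ->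
  (forall c, 0 <= c -> is_derive f c (df c)) ->
  (forall c, 0 < c -> 0 <= df c) -> f 0 <= f x.
Proof.
  intros Hx Hd Hp. destruct (Req_dec x 0) as [->|Hx0]; [lra|].
  destruct (MVT_cor2 f df 0 x) as [c [Hc1 Hc2]]; [lra| |].
  - intros c Hc. apply is_derive_Reals. apply Hd. lra.
  - assert (0 <= df c) by (apply Hp; lra). nra.
Qed.

Lemma E1 x : 0 <= x -> exp (-x) <= 1.
Proof. intros. rewrite <- exp_0. destruct (Req_dec x 0). subst. rewrite Ropp_0. lra.
  left. apply exp_increasing. lra. Qed.

Lemma E2 x : 0 <= x -> 1 - x <= exp (-x).
Proof.
  intros Hx. assert (H : (fun x => exp (-x) - (1 - x)) 0 <= (fun x => exp (-x) - (1 - x)) x).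
  { apply (mono0 (fun x => exp (-x) - (1 - x)) (fun x => 1 - exp (-x)) x Hx).
    - intros c _. auto_derive; auto. field.
    - intros c Hc. pose proof (E1 c). lra. }
  simpl in H. rewrite Ropp_0, exp_0 in H. apply Rminus_le_0 in H.
  lra.
Qed.

Lemma E3 x : 0 <= x -> exp (-x) <= 1 - x + x^2/2.
Proof.
  intros Hx. assert (H : (fun x => (1 - x + x^2/2) - exp (-x)) 0 <= (fun x => (1 - x + x^2/2) - exp (-x)) x).
  { apply (mono0 (fun x => (1 - x + x^2/2) - exp (-x)) (fun x => -1 + x + exp (-x)) x Hx).
    - intros c _. auto_derive; auto. field.
    - intros c Hc. pose proof (E2 c). lra. }
  simpl in H. rewrite Ropp_0, exp_0 in H. 
  ring_simplify in H. lra.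
Qed.

Lemma E4 x : 0 <= x -> 1 - x + x^2/2 - x^3/6 <= exp (-x).
Proof.
  intros Hx. assert (H : (fun x => exp (-x) - (1 - x + x^2/2 - x^3/6)) 0 <= (fun x => exp (-x) - (1 - x + x^2/2 - x^3/6)) x).
  { apply (mono0 (fun x => exp (-x) - (1 - x + x^2/2 - x^3/6)) (fun x => (1 - x + x^2/2) - exp (-x)) x Hx).
    - intros c _. auto_derive; auto. field.
    - intros c Hc. pose proof (E3 c). lra. }
  simpl in H. rewrite Ropp_0, exp_0 in H. 
  lra.
Qed.

Lemma E5 x : 0 <= x -> exp (-x) <= 1 - x + x^2/2 - x^3/6 + x^4/24.
Proof.
  intros Hx. assert (H : (fun x => (1 - x + x^2/2 - x^3/6 + x^4/24) - exp (-x)) 0 <= (fun x => (1 - x + x^2/2 - x^3/6 + x^4/24) - exp (-x)) x).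
  { apply (mono0 (fun x => (1 - x + x^2/2 - x^3/6 + x^4/24) - exp (-x)) (fun x => exp (-x) - (1 - x + x^2/2 - x^3/6)) x Hx).
    - intros c _. auto_derive; auto. field.
    - intros c Hc. pose proof (E4 c). lra. }
  simpl in H. rewrite Ropp_0, exp_0 in H. 
  lra.
Qed.

Lemma Eup y : 0 <= y -> y <= 1/4 -> exp y <= 1 + y + y^2/2 + y^3/6 + y^4/8.
Proof.
  intros H0 H1. pose proof (E4 y H0) as H.
  set (D := 1 - y + y^2/2 - y^3/6) in *.
  assert (HD : 0 < D) by (unfold D; nra).
  assert (Hq : 1 <= (1 + y + y^2/2 + y^3/6 + y^4/8) * D).
  { unfold D. assert (0 <= y^4) by (apply pow_le; lra).
    assert (y^4 * (1/24 - y/8 + y^2*(1/16 - 1/36) - y^3/48) >= 0).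
    { apply Rle_ge, Rmult_le_pos; [lra|]. nra. }
    nra. }
  assert (exp y * exp (-y) = 1) by (rewrite <- exp_plus; replace (y + - y) with 0 by ring; apply exp_0).
  assert (0 < exp y) by apply exp_pos.
  nra.
Qed.

Lemma Ln1 u : 0 <= u -> u - u^2/2 + u^3/3 - u^4/4 <= ln (1 + u).
Proof.
  intros Hu. assert (H : (fun u => ln (1+u) - (u - u^2/2 + u^3/3 - u^4/4)) 0 <= (fun u => ln (1+u) - (u - u^2/2 + u^3/3 - u^4/4)) u).
  { apply (mono0 (fun u => ln (1+u) - (u - u^2/2 + u^3/3 - u^4/4)) (fun u => u^4 / (1+u)) u Hu).
    - intros c Hc. auto_derive. lra. field. lra.
    - intros c Hc. apply Rdiv_le_0_compat; [apply pow_le|]; lra. }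
  simpl in H. replace (1+0) with 1 in H by ring. rewrite ln_1 in H.
  lra.
Qed.

Lemma Ln2 v : 0 <= v -> ln (1 + v) <= v - v^2/2 + v^3/3.
Proof.
  intros Hu. assert (H : (fun u => (u - u^2/2 + u^3/3) - ln (1+u)) 0 <= (fun u => (u - u^2/2 + u^3/3) - ln (1+u)) v).
  { apply (mono0 (fun u => (u - u^2/2 + u^3/3) - ln (1+u)) (fun u => u^3 / (1+u)) v Hu).
    - intros c Hc. auto_derive. lra. field. lra.
    - intros c Hc. apply Rdiv_le_0_compat; [apply pow_le|]; lra. }
  simpl in H. replace (1+0) with 1 in H by ring. rewrite ln_1 in H.
  lra.
Qed.

Lemma Ln3 u : 0 <= u -> 2*u/(2+u) <= ln (1 + u).
Proof.
  intros Hu. assert (H : (fun u => ln (1+u) - 2*u/(2+u)) 0 <= (fun u => ln (1+u) - 2*u/(2+u)) u).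
  { apply (mono0 (fun u => ln (1+u) - 2*u/(2+u)) (fun u => u^2 / ((1+u)*(2+u)^2)) u Hu).
    - intros c Hc. auto_derive. lra. field. lra.
    - intros c Hc. apply Rdiv_le_0_compat; [apply pow_le|]; try lra.
    apply Rmult_lt_0_compat; [lra|]. apply pow_lt; lra. }
  simpl in H. replace (1+0) with 1 in H by ring. rewrite ln_1 in H.
  replace (2*0/(2+0)) with 0 in H by field. lra.
Qed.

Lemma mono_bd (u t g : R) (i j k : nat) : 0 <= u -> u <= 1/8 -> 0 <= t -> t <= 27/100 ->
  0 <= g -> g <= 27/200 ->
  0 <= u^i * t^j * g^k <= (1/8)^i * (27/100)^j * (27/200)^k.
Proof.
  intros. split.
  - repeat apply Rmult_le_pos; apply pow_le; lra.
  - apply Rmult_le_compat; try (apply pow_le; lra).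
    + apply Rmult_le_pos; apply pow_le; lra.
    + apply Rmult_le_compat; try (apply pow_le; lra); apply pow_incr; lra.
    + apply pow_incr; lra.
Qed.

Definition K1 (u t g : R) : R := (4) * (1) + (53/6) * (g^1) + (-51/2) * (g^2) + (1/3) * (g^3) + (-1/6) * (g^4) + (-53/12) * (t^1) + (51/2) * (t^1 * g^1) + (-1/2) * (t^1 * g^2) + (1/3) * (t^1 * g^3) + (-51/8) * (t^2) + (1/4) * (t^2 * g^1) + (-1/4) * (t^2 * g^2) + (-1/24) * (t^3) + (1/12) * (t^3 * g^1) + (-1/96) * (t^4) + (8) * (u^1) + (95/3) * (u^1 * g^1) + (-159/4) * (u^1 * g^2) + (19/6) * (u^1 * g^3) + (-1/3) * (u^1 * g^4) + (-95/6) * (u^1 * t^1) + (159/4) * (u^1 * t^1 * g^1) + (-19/4) * (u^1 * t^1 * g^2) + (2/3) * (u^1 * t^1 * g^3) + (-159/16) * (u^1 * t^2) + (19/8) * (u^1 * t^2 * g^1) + (-1/2) * (u^1 * t^2 * g^2) + (-19/48) * (u^1 * t^3) + (1/6) * (u^1 * t^3 * g^1) + (-1/48) * (u^1 * t^4) + (-183/8) * (u^2) + (105/2) * (u^2 * g^1) + (-199/6) * (u^2 * g^2) + (71/12) * (u^2 * g^3) + (-1) * (u^2 * g^4) + (-105/4) * (u^2 * t^1) + (199/6) * (u^2 * t^1 * g^1) + (-71/8) * (u^2 * t^1 * g^2) + (2) * (u^2 * t^1 * g^3) + (-199/24) * (u^2 * t^2) + (71/16) * (u^2 * t^2 * g^1)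 + (-3/2) * (u^2 * t^2 * g^2) + (-71/96) * (u^2 * t^3) + (1/2) * (u^2 * t^3 * g^1) + (-1/16) * (u^2 * t^4) + (-2569/18) * (u^3) + (577/24) * (u^3 * g^1) + (-551/24) * (u^3 * g^2) + (97/36) * (u^3 * g^3) + (-4/3) * (u^3 * g^4) + (-577/48) * (u^3 * t^1) + (551/24) * (u^3 * t^1 * g^1) + (-97/24) * (u^3 * t^1 * g^2) + (8/3) * (u^3 * t^1 * g^3) + (-551/96) * (u^3 * t^2) + (97/48) * (u^3 * t^2 * g^1) + (-2) * (u^3 * t^2 * g^2) + (-97/288) * (u^3 * t^3) + (2/3) * (u^3 * t^3 * g^1) + (-1/12) * (u^3 * t^4) + (-42449/144) * (u^4) + (-919/24) * (u^4 * g^1) + (-953/48) * (u^4 * g^2) + (31/72) * (u^4 * g^3) + (-2/3) * (u^4 * g^4) + (919/48) * (u^4 * t^1) + (953/48) * (u^4 * t^1 * g^1) + (-31/48) * (u^4 * t^1 * g^2) + (4/3) * (u^4 * t^1 * g^3) + (-953/192) * (u^4 * t^2) + (31/96) * (u^4 * t^2 * g^1) + (-1) * (u^4 * t^2 * g^2) + (-31/576) * (u^4 * t^3) + (1/3) * (u^4 * t^3 * g^1) + (-1/24) * (u^4 * t^4) + (-43351/144) * (u^5) + (-985/24) * (u^5 * g^1) + (-83/12) * (u^5 * g^2) + (37/24) * (u^5 * g^3) + (985/48) * (u^5 * t^1) + (83/12) * (u^5 * t^1 * g^1) + (-37/16) * (u^5 * t^1 * g^2) + (-83/48) * (u^5 *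 t^2) + (37/32) * (u^5 * t^2 * g^1) + (-37/192) * (u^5 * t^3) + (-45685/288) * (u^6) + (143/144) * (u^6 * g^1) + (-29/72) * (u^6 * g^2) + (5/9) * (u^6 * g^3) + (-143/288) * (u^6 * t^1) + (29/72) * (u^6 * t^1 * g^1) + (-5/6) * (u^6 * t^1 * g^2) + (-29/288) * (u^6 * t^2) + (5/12) * (u^6 * t^2 * g^1) + (-5/72) * (u^6 * t^3) + (-12101/144) * (u^7) + (-709/96) * (u^7 * g^1) + (-115/18) * (u^7 * g^2) + (4/9) * (u^7 * g^3) + (709/192) * (u^7 * t^1) + (115/18) * (u^7 * t^1 * g^1) + (-2/3) * (u^7 * t^1 * g^2) + (-115/72) * (u^7 * t^2) + (1/3) * (u^7 * t^2 * g^1) + (-1/18) * (u^7 * t^3) + (-1118329/10368) * (u^8) + (-8323/288) * (u^8 * g^1) + (-301/64) * (u^8 * g^2) + (2/3) * (u^8 * g^3) + (8323/576) * (u^8 * t^1) + (301/64) * (u^8 * t^1 * g^1) + (-1) * (u^8 * t^1 * g^2) + (-301/256) * (u^8 * t^2) + (1/2) * (u^8 * t^2 * g^1) + (-1/12) * (u^8 * t^3) + (-402551/5184) * (u^9) + (-27319/2592) * (u^9 * g^1) + (-14/9) * (u^9 * g^2) + (27319/5184) * (u^9 * t^1) + (14/9) * (u^9 * t^1 * g^1) + (-7/18) * (u^9 * t^2) + (-5903/324) * (u^10) + (4685/5184) * (u^10 * g^1) + (-307/576) * (u^10 * g^2) + (-4685/10368) * (u^10 * t^1) + (307/576) * (u^10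 * t^1 * g^1) + (-307/2304) * (u^10 * t^2) + (-7969/384) * (u^11) + (-6605/864) * (u^11 * g^1) + (1/6) * (u^11 * g^2) + (6605/1728) * (u^11 * t^1) + (-1/6) * (u^11 * t^1 * g^1) + (1/24) * (u^11 * t^2) + (-1963745/62208) * (u^12) + (-85625/10368) * (u^12 * g^1) + (-1/4) * (u^12 * g^2) + (85625/20736) * (u^12 * t^1) + (1/4) * (u^12 * t^1 * g^1) + (-1/16) * (u^12 * t^2) + (-173197/15552) * (u^13) + (-11411/5184) * (u^13 * g^1) + (11411/10368) * (u^13 * t^1) + (-27697/20736) * (u^14) + (-5/288) * (u^14 * g^1) + (5/576) * (u^14 * t^1) + (-214037/31104) * (u^15) + (-35/384) * (u^15 * g^1) + (35/768) * (u^15 * t^1) + (-2974633/497664) * (u^16) + (1/24) * (u^16 * g^1) + (-1/48) * (u^16 * t^1) + (-37429/20736) * (u^17) + (-37/128) * (u^18) + (-11/1152) * (u^19) + (-19/6144) * (u^20).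

Lemma K1_pos u t g : 0 <= u -> u <= 1/8 -> 0 <= t -> t <= 27/100 -> 0 <= g -> g <= 27/200 -> 0 <= K1 u t g.
Proof.
  intros Hu0 Hu1 Ht0 Ht1 Hg0 Hg1. unfold K1.
  pose proof (mono_bd u t g 0 0 1 Hu0 Hu1 Ht0 Ht1 Hg0 Hg1).
  pose proof (mono_bd u t g 0 0 2 Hu0 Hu1 Ht0 Ht1 Hg0 Hg1).
  pose proof (mono_bd u t g 0 0 3 Hu0 Hu1 Ht0 Ht1 Hg0 Hg1).
  pose proof (mono_bd u t g 0 0 4 Hu0 Hu1 Ht0 Ht1 Hg0 Hg1).
  pose proof (mono_bd u t g 0 1 0 Hu0 Hu1 Ht0 Ht1 Hg0 Hg1).
  pose proof (mono_bd u t g 0 1 1 Hu0 Hu1 Ht0 Ht1 Hg0 Hg1).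
  pose proof (mono_bd u t g 0 1 2 Hu0 Hu1 Ht0 Ht1 Hg0 Hg1).
  pose proof (mono_bd u t g 0 1 3 Hu0 Hu1 Ht0 Ht1 Hg0 Hg1).
  pose proof (mono_bd u t g 0 2 0 Hu0 Hu1 Ht0 Ht1 Hg0 Hg1).
  pose proof (mono_bd u t g 0 2 1 Hu0 Hu1 Ht0 Ht1 Hg0 Hg1).
  pose proof (mono_bd u t g 0 2 2 Hu0 Hu1 Ht0 Ht1 Hg0 Hg1).
  pose proof (mono_bd u t g 0 3 0 Hu0 Hu1 Ht0 Ht1 Hg0 Hg1).
  pose proof (mono_bd u t g 0 3 1 Hu0 Hu1 Ht0 Ht1 Hg0 Hg1).
  pose proof (mono_bd u t g 0 4 0 Hu0 Hu1 Ht0 Ht1 Hg0 Hg1).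
  pose proof (mono_bd u t g 1 0 0 Hu0 Hu1 Ht0 Ht1 Hg0 Hg1).
  pose proof (mono_bd u t g 1 0 1 Hu0 Hu1 Ht0 Ht1 Hg0 Hg1).
  pose proof (mono_bd u t g 1 0 2 Hu0 Hu1 Ht0 Ht1 Hg0 Hg1).
  pose proof (mono_bd u t g 1 0 3 Hu0 Hu1 Ht0 Ht1 Hg0 Hg1).
  pose proof (mono_bd u t g 1 0 4 Hu0 Hu1 Ht0 Ht1 Hg0 Hg1).
  pose proof (mono_bd u t g 1 1 0 Hu0 Hu1 Ht0 Ht1 Hg0 Hg1).
  pose proof (mono_bd u t g 1 1 1 Hu0 Hu1 Ht0 Ht1 Hg0 Hg1).
  pose proof (mono_bd u t g 1 1 2 Hu0 Hu1 Ht0 Ht1 Hg0 Hg1).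
  pose proof (mono_bd u t g 1 1 3 Hu0 Hu1 Ht0 Ht1 Hg0 Hg1).
  pose proof (mono_bd u t g 1 2 0 Hu0 Hu1 Ht0 Ht1 Hg0 Hg1).
  pose proof (mono_bd u t g 1 2 1 Hu0 Hu1 Ht0 Ht1 Hg0 Hg1).
  pose proof (mono_bd u t g 1 2 2 Hu0 Hu1 Ht0 Ht1 Hg0 Hg1).
  pose proof (mono_bd u t g 1 3 0 Hu0 Hu1 Ht0 Ht1 Hg0 Hg1).
  pose proof (mono_bd u t g 1 3 1 Hu0 Hu1 Ht0 Ht1 Hg0 Hg1).
  pose proof (mono_bd u t g 1 4 0 Hu0 Hu1 Ht0 Ht1 Hg0 Hg1).
  pose proof (mono_bd u t g 2 0 0 Hu0 Hu1 Ht0 Ht1 Hg0 Hg1).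
  pose proof (mono_bd u t g 2 0 1 Hu0 Hu1 Ht0 Ht1 Hg0 Hg1).
  pose proof (mono_bd u t g 2 0 2 Hu0 Hu1 Ht0 Ht1 Hg0 Hg1).
  pose proof (mono_bd u t g 2 0 3 Hu0 Hu1 Ht0 Ht1 Hg0 Hg1).
  pose proof (mono_bd u t g 2 0 4 Hu0 Hu1 Ht0 Ht1 Hg0 Hg1).
  pose proof (mono_bd u t g 2 1 0 Hu0 Hu1 Ht0 Ht1 Hg0 Hg1).
  pose proof (mono_bd u t g 2 1 1 Hu0 Hu1 Ht0 Ht1 Hg0 Hg1).
  pose proof (mono_bd u t g 2 1 2 Hu0 Hu1 Ht0 Ht1 Hg0 Hg1).
  pose proof (mono_bd u t g 2 1 3 Hu0 Hu1 Ht0 Ht1 Hg0 Hg1).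
  pose proof (mono_bd u t g 2 2 0 Hu0 Hu1 Ht0 Ht1 Hg0 Hg1).
  pose proof (mono_bd u t g 2 2 1 Hu0 Hu1 Ht0 Ht1 Hg0 Hg1).
  pose proof (mono_bd u t g 2 2 2 Hu0 Hu1 Ht0 Ht1 Hg0 Hg1).
  pose proof (mono_bd u t g 2 3 0 Hu0 Hu1 Ht0 Ht1 Hg0 Hg1).
  pose proof (mono_bd u t g 2 3 1 Hu0 Hu1 Ht0 Ht1 Hg0 Hg1).
  pose proof (mono_bd u t g 2 4 0 Hu0 Hu1 Ht0 Ht1 Hg0 Hg1).
  pose proof (mono_bd u t g 3 0 0 Hu0 Hu1 Ht0 Ht1 Hg0 Hg1).
  pose proof (mono_bd u t g 3 0 1 Hu0 Hu1 Ht0 Ht1 Hg0 Hg1).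
  pose proof (mono_bd u t g 3 0 2 Hu0 Hu1 Ht0 Ht1 Hg0 Hg1).
  pose proof (mono_bd u t g 3 0 3 Hu0 Hu1 Ht0 Ht1 Hg0 Hg1).
  pose proof (mono_bd u t g 3 0 4 Hu0 Hu1 Ht0 Ht1 Hg0 Hg1).
  pose proof (mono_bd u t g 3 1 0 Hu0 Hu1 Ht0 Ht1 Hg0 Hg1).
  pose proof (mono_bd u t g 3 1 1 Hu0 Hu1 Ht0 Ht1 Hg0 Hg1).
  pose proof (mono_bd u t g 3 1 2 Hu0 Hu1 Ht0 Ht1 Hg0 Hg1).
  pose proof (mono_bd u t g 3 1 3 Hu0 Hu1 Ht0 Ht1 Hg0 Hg1).
  pose proof (mono_bd u t g 3 2 0 Hu0 Hu1 Ht0 Ht1 Hg0 Hg1).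
  pose proof (mono_bd u t g 3 2 1 Hu0 Hu1 Ht0 Ht1 Hg0 Hg1).
  pose proof (mono_bd u t g 3 2 2 Hu0 Hu1 Ht0 Ht1 Hg0 Hg1).
  pose proof (mono_bd u t g 3 3 0 Hu0 Hu1 Ht0 Ht1 Hg0 Hg1).
  pose proof (mono_bd u t g 3 3 1 Hu0 Hu1 Ht0 Ht1 Hg0 Hg1).
  pose proof (mono_bd u t g 3 4 0 Hu0 Hu1 Ht0 Ht1 Hg0 Hg1).
  pose proof (mono_bd u t g 4 0 0 Hu0 Hu1 Ht0 Ht1 Hg0 Hg1).
  pose proof (mono_bd u t g 4 0 1 Hu0 Hu1 Ht0 Ht1 Hg0 Hg1).
  pose proof (mono_bd u t g 4 0 2 Hu0 Hu1 Ht0 Ht1 Hg0 Hg1).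
  pose proof (mono_bd u t g 4 0 3 Hu0 Hu1 Ht0 Ht1 Hg0 Hg1).
  pose proof (mono_bd u t g 4 0 4 Hu0 Hu1 Ht0 Ht1 Hg0 Hg1).
  pose proof (mono_bd u t g 4 1 0 Hu0 Hu1 Ht0 Ht1 Hg0 Hg1).
  pose proof (mono_bd u t g 4 1 1 Hu0 Hu1 Ht0 Ht1 Hg0 Hg1).
  pose proof (mono_bd u t g 4 1 2 Hu0 Hu1 Ht0 Ht1 Hg0 Hg1).
  pose proof (mono_bd u t g 4 1 3 Hu0 Hu1 Ht0 Ht1 Hg0 Hg1).
  pose proof (mono_bd u t g 4 2 0 Hu0 Hu1 Ht0 Ht1 Hg0 Hg1).
  pose proof (mono_bd u t g 4 2 1 Hu0 Hu1 Ht0 Ht1 Hg0 Hg1).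
  pose proof (mono_bd u t g 4 2 2 Hu0 Hu1 Ht0 Ht1 Hg0 Hg1).
  pose proof (mono_bd u t g 4 3 0 Hu0 Hu1 Ht0 Ht1 Hg0 Hg1).
  pose proof (mono_bd u t g 4 3 1 Hu0 Hu1 Ht0 Ht1 Hg0 Hg1).
  pose proof (mono_bd u t g 4 4 0 Hu0 Hu1 Ht0 Ht1 Hg0 Hg1).
  pose proof (mono_bd u t g 5 0 0 Hu0 Hu1 Ht0 Ht1 Hg0 Hg1).
  pose proof (mono_bd u t g 5 0 1 Hu0 Hu1 Ht0 Ht1 Hg0 Hg1).
  pose proof (mono_bd u t g 5 0 2 Hu0 Hu1 Ht0 Ht1 Hg0 Hg1).
  pose proof (mono_bd u t g 5 0 3 Hu0 Hu1 Ht0 Ht1 Hg0 Hg1).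
  pose proof (mono_bd u t g 5 1 0 Hu0 Hu1 Ht0 Ht1 Hg0 Hg1).
  pose proof (mono_bd u t g 5 1 1 Hu0 Hu1 Ht0 Ht1 Hg0 Hg1).
  pose proof (mono_bd u t g 5 1 2 Hu0 Hu1 Ht0 Ht1 Hg0 Hg1).
  pose proof (mono_bd u t g 5 2 0 Hu0 Hu1 Ht0 Ht1 Hg0 Hg1).
  pose proof (mono_bd u t g 5 2 1 Hu0 Hu1 Ht0 Ht1 Hg0 Hg1).
  pose proof (mono_bd u t g 5 3 0 Hu0 Hu1 Ht0 Ht1 Hg0 Hg1).
  pose proof (mono_bd u t g 6 0 0 Hu0 Hu1 Ht0 Ht1 Hg0 Hg1).
  pose proof (mono_bd u t g 6 0 1 Hu0 Hu1 Ht0 Ht1 Hg0 Hg1).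
  pose proof (mono_bd u t g 6 0 2 Hu0 Hu1 Ht0 Ht1 Hg0 Hg1).
  pose proof (mono_bd u t g 6 0 3 Hu0 Hu1 Ht0 Ht1 Hg0 Hg1).
  pose proof (mono_bd u t g 6 1 0 Hu0 Hu1 Ht0 Ht1 Hg0 Hg1).
  pose proof (mono_bd u t g 6 1 1 Hu0 Hu1 Ht0 Ht1 Hg0 Hg1).
  pose proof (mono_bd u t g 6 1 2 Hu0 Hu1 Ht0 Ht1 Hg0 Hg1).
  pose proof (mono_bd u t g 6 2 0 Hu0 Hu1 Ht0 Ht1 Hg0 Hg1).
  pose proof (mono_bd u t g 6 2 1 Hu0 Hu1 Ht0 Ht1 Hg0 Hg1).
  pose proof (mono_bd u t g 6 3 0 Hu0 Hu1 Ht0 Ht1 Hg0 Hg1).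
  pose proof (mono_bd u t g 7 0 0 Hu0 Hu1 Ht0 Ht1 Hg0 Hg1).
  pose proof (mono_bd u t g 7 0 1 Hu0 Hu1 Ht0 Ht1 Hg0 Hg1).
  pose proof (mono_bd u t g 7 0 2 Hu0 Hu1 Ht0 Ht1 Hg0 Hg1).
  pose proof (mono_bd u t g 7 0 3 Hu0 Hu1 Ht0 Ht1 Hg0 Hg1).
  pose proof (mono_bd u t g 7 1 0 Hu0 Hu1 Ht0 Ht1 Hg0 Hg1).
  pose proof (mono_bd u t g 7 1 1 Hu0 Hu1 Ht0 Ht1 Hg0 Hg1).
  pose proof (mono_bd u t g 7 1 2 Hu0 Hu1 Ht0 Ht1 Hg0 Hg1).
  pose proof (mono_bd u t g 7 2 0 Hu0 Hu1 Ht0 Ht1 Hg0 Hg1).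
  pose proof (mono_bd u t g 7 2 1 Hu0 Hu1 Ht0 Ht1 Hg0 Hg1).
  pose proof (mono_bd u t g 7 3 0 Hu0 Hu1 Ht0 Ht1 Hg0 Hg1).
  pose proof (mono_bd u t g 8 0 0 Hu0 Hu1 Ht0 Ht1 Hg0 Hg1).
  pose proof (mono_bd u t g 8 0 1 Hu0 Hu1 Ht0 Ht1 Hg0 Hg1).
  pose proof (mono_bd u t g 8 0 2 Hu0 Hu1 Ht0 Ht1 Hg0 Hg1).
  pose proof (mono_bd u t g 8 0 3 Hu0 Hu1 Ht0 Ht1 Hg0 Hg1).
  pose proof (mono_bd u t g 8 1 0 Hu0 Hu1 Ht0 Ht1 Hg0 Hg1).
  pose proof (mono_bd u t g 8 1 1 Hu0 Hu1 Ht0 Ht1 Hg0 Hg1).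
  pose proof (mono_bd u t g 8 1 2 Hu0 Hu1 Ht0 Ht1 Hg0 Hg1).
  pose proof (mono_bd u t g 8 2 0 Hu0 Hu1 Ht0 Ht1 Hg0 Hg1).
  pose proof (mono_bd u t g 8 2 1 Hu0 Hu1 Ht0 Ht1 Hg0 Hg1).
  pose proof (mono_bd u t g 8 3 0 Hu0 Hu1 Ht0 Ht1 Hg0 Hg1).
  pose proof (mono_bd u t g 9 0 0 Hu0 Hu1 Ht0 Ht1 Hg0 Hg1).
  pose proof (mono_bd u t g 9 0 1 Hu0 Hu1 Ht0 Ht1 Hg0 Hg1).
  pose proof (mono_bd u t g 9 0 2 Hu0 Hu1 Ht0 Ht1 Hg0 Hg1).
  pose proof (mono_bd u t g 9 1 0 Hu0 Hu1 Ht0 Ht1 Hg0 Hg1).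
  pose proof (mono_bd u t g 9 1 1 Hu0 Hu1 Ht0 Ht1 Hg0 Hg1).
  pose proof (mono_bd u t g 9 2 0 Hu0 Hu1 Ht0 Ht1 Hg0 Hg1).
  pose proof (mono_bd u t g 10 0 0 Hu0 Hu1 Ht0 Ht1 Hg0 Hg1).
  pose proof (mono_bd u t g 10 0 1 Hu0 Hu1 Ht0 Ht1 Hg0 Hg1).
  pose proof (mono_bd u t g 10 0 2 Hu0 Hu1 Ht0 Ht1 Hg0 Hg1).
  pose proof (mono_bd u t g 10 1 0 Hu0 Hu1 Ht0 Ht1 Hg0 Hg1).
  pose proof (mono_bd u t g 10 1 1 Hu0 Hu1 Ht0 Ht1 Hg0 Hg1).
  pose proof (mono_bd u t g 10 2 0 Hu0 Hu1 Ht0 Ht1 Hg0 Hg1).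
  pose proof (mono_bd u t g 11 0 0 Hu0 Hu1 Ht0 Ht1 Hg0 Hg1).
  pose proof (mono_bd u t g 11 0 1 Hu0 Hu1 Ht0 Ht1 Hg0 Hg1).
  pose proof (mono_bd u t g 11 0 2 Hu0 Hu1 Ht0 Ht1 Hg0 Hg1).
  pose proof (mono_bd u t g 11 1 0 Hu0 Hu1 Ht0 Ht1 Hg0 Hg1).
  pose proof (mono_bd u t g 11 1 1 Hu0 Hu1 Ht0 Ht1 Hg0 Hg1).
  pose proof (mono_bd u t g 11 2 0 Hu0 Hu1 Ht0 Ht1 Hg0 Hg1).
  pose proof (mono_bd u t g 12 0 0 Hu0 Hu1 Ht0 Ht1 Hg0 Hg1).
  pose proof (mono_bd u t g 12 0 1 Hu0 Hu1 Ht0 Ht1 Hg0 Hg1).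
  pose proof (mono_bd u t g 12 0 2 Hu0 Hu1 Ht0 Ht1 Hg0 Hg1).
  pose proof (mono_bd u t g 12 1 0 Hu0 Hu1 Ht0 Ht1 Hg0 Hg1).
  pose proof (mono_bd u t g 12 1 1 Hu0 Hu1 Ht0 Ht1 Hg0 Hg1).
  pose proof (mono_bd u t g 12 2 0 Hu0 Hu1 Ht0 Ht1 Hg0 Hg1).
  pose proof (mono_bd u t g 13 0 0 Hu0 Hu1 Ht0 Ht1 Hg0 Hg1).
  pose proof (mono_bd u t g 13 0 1 Hu0 Hu1 Ht0 Ht1 Hg0 Hg1).
  pose proof (mono_bd u t g 13 1 0 Hu0 Hu1 Ht0 Ht1 Hg0 Hg1).
  pose proof (mono_bd u t g 14 0 0 Hu0 Hu1 Ht0 Ht1 Hg0 Hg1).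
  pose proof (mono_bd u t g 14 0 1 Hu0 Hu1 Ht0 Ht1 Hg0 Hg1).
  pose proof (mono_bd u t g 14 1 0 Hu0 Hu1 Ht0 Ht1 Hg0 Hg1).
  pose proof (mono_bd u t g 15 0 0 Hu0 Hu1 Ht0 Ht1 Hg0 Hg1).
  pose proof (mono_bd u t g 15 0 1 Hu0 Hu1 Ht0 Ht1 Hg0 Hg1).
  pose proof (mono_bd u t g 15 1 0 Hu0 Hu1 Ht0 Ht1 Hg0 Hg1).
  pose proof (mono_bd u t g 16 0 0 Hu0 Hu1 Ht0 Ht1 Hg0 Hg1).
  pose proof (mono_bd u t g 16 0 1 Hu0 Hu1 Ht0 Ht1 Hg0 Hg1).
  pose proof (mono_bd u t g 16 1 0 Hu0 Hu1 Ht0 Ht1 Hg0 Hg1).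
  pose proof (mono_bd u t g 17 0 0 Hu0 Hu1 Ht0 Ht1 Hg0 Hg1).
  pose proof (mono_bd u t g 18 0 0 Hu0 Hu1 Ht0 Ht1 Hg0 Hg1).
  pose proof (mono_bd u t g 19 0 0 Hu0 Hu1 Ht0 Ht1 Hg0 Hg1).
  pose proof (mono_bd u t g 20 0 0 Hu0 Hu1 Ht0 Ht1 Hg0 Hg1).
  lra.
Qed.

Definition aa (u t : R) := 1 - t/2 - u^2/2 + u^3/3 - u^4/4.
Definition bb (u t : R) := 1 + u - u^2 + 7/6*u^3 + 7/3*u^4 + u^5/4 - t/2.
Definition WW (u : R) := (1+u)*(1+2*u).
Definition Pp (x : R) := 1 - x + x^2/2 - x^3/6 + x^4/24.
Definition Qq (y : R) := 1 + y + y^2/2 + y^3/6 + y^4/8.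

Lemma key_poly u t g : 0 < u -> u <= 1/8 -> 0 <= t -> t^2 <= 9/16*u -> 0 <= g -> g <= t/2 ->
  let X := u * (aa u t + g) * (1+2*u) / WW u in
  let Y := u * (bb u t + g) / WW u in
  0 <= X /\ 0 <= Y /\ Y <= 1/4 /\ Pp X + Qq Y < 2.
Proof.
  intros Hu0 Hu1 Ht0 Ht2 Hg0 Hg1 X Y.
  assert (Ht1 : t <= 27/100) by nra.
  assert (HW : 1 + 3*u <= WW u) by (unfold WW; nra).
  assert (Hp2 := pow_incr u (1/8) 2 ltac:(lra)).
  assert (Hp3 := pow_incr u (1/8) 3 ltac:(lra)).
  assert (Hp4 := pow_incr u (1/8) 4 ltac:(lra)).
  assert (Hp5 := pow_incr u (1/8) 5 ltac:(lra)).
  assert (0 <= u^2) by (apply pow_le; lra).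
  assert (0 <= u^3) by (apply pow_le; lra).
  assert (0 <= u^4) by (apply pow_le; lra).
  assert (0 <= u^5) by (apply pow_le; lra).
  assert (Ha : 0 <= aa u t + g) by (unfold aa; lra).
  assert (Hb0 : 0 <= bb u t + g) by (unfold bb; lra).
  assert (Hb1 : bb u t + g <= 2 + 27/200) by (unfold bb; lra).
  split; [|split; [|split]].
  - unfold X. apply Rdiv_le_0_compat; [|lra]. apply Rmult_le_pos; [|lra]. apply Rmult_le_pos; lra.
  - unfold Y. apply Rdiv_le_0_compat; [|lra]. apply Rmult_le_pos; lra.
  - unfold Y. apply Rmult_le_reg_r with (WW u); [lra|]. unfold Rdiv. rewrite Rmult_assoc, Rinv_l by lra. nra.
  - set (A := (aa u t + g) * (1+2*u)). set (B := bb u t + g).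
    assert (E : 2 - Pp X - Qq Y = u / (WW u)^4 * ((A-B)*(WW u)^3 - u*(A^2+B^2)*(WW u)^2/2 + u^2*(A^3-B^3)*WW u/6 - u^3*A^4/24 - u^3*B^4/8)).
    { unfold X, Y, Pp, Qq, A, B. field. lra. }
    assert (E2 : (A-B)*(WW u)^3 - u*(A^2+B^2)*(WW u)^2/2 + u^2*(A^3-B^3)*WW u/6 - u^3*A^4/24 - u^3*B^4/8
       = - u*(t/2-g)^2 + u^2*(1/2 + g - t/2 - 2*t^2 + 8*g*(t-g)) + u^3 * K1 u t g).
    { unfold A, B, aa, bb, WW, K1. field. }
    assert (HK := K1_pos u t g ltac:(lra) Hu1 Ht0 Ht1 Hg0 ltac:(lra)).
    assert (Hpos : 0 < - u*(t/2-g)^2 + u^2*(1/2 + g - t/2 - 2*t^2 + 8*g*(t-g)) + u^3 * K1 u t g).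
    { assert ((t/2-g)^2 <= t^2/4) by nra.
      assert (u*(t/2-g)^2 <= 9/64*u^2) by nra.
      assert (0 <= u^3 * K1 u t g) by (apply Rmult_le_pos; [apply pow_le|]; lra).
      assert (0 <= g*(t-g)) by nra.
      assert (0 < u^2 * (1/2 + g - t/2 - 2*t^2 + 8*g*(t-g) - 9/64)) by (apply Rmult_lt_0_compat; nra).
      nra. }
    assert (0 < u / (WW u)^4) by (apply Rdiv_lt_0_compat; [lra| apply pow_lt; lra]).
    rewrite E2 in E. nra.
Qed.

Lemma core (N l al be A : R) : 8 <= N -> 0 <= l -> l^2 <= 9/16*N ->
  /N - (/N)^2/2 + (/N)^3/3 - (/N)^4/4 <= al ->
  be <= 2/N - (2/N)^2/2 + (2/N)^3/3 ->
  N*l - N + 1 <= A -> A <= (N + /2)*l - N + 1 ->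
  exp (-((N*(l+al) - A)/(N*(N+1)))) + exp (((N+1)*(l+be) - A - (l+al))/((N+1)*(N+2))) < 2.
Proof.
  intros HN Hl0 Hl2 Hal Hbe HA1 HA2.
  set (u := /N). set (t := l/N). set (s := (N + /2)*l - N + 1 - A). set (g := s/N).
  assert (Hu0 : 0 < u) by (unfold u; apply Rinv_0_lt_compat; lra).
  assert (Hu1 : u <= 1/8).
  { unfold u. replace (1/8) with (/8) by field. apply Rinv_le_contravar; lra. }
  assert (Ht0 : 0 <= t) by (unfold t; apply Rdiv_le_0_compat; lra).
  assert (Ht2 : t^2 <= 9/16*u).
  { unfold t, u. replace ((l/N)^2) with (l^2 / N / N) by (field; lra).
    replace (9/16 * /N) with (9/16*N/N/N) by (field; lra).
    unfold Rdiv. apply Rmult_le_compat_r; [left; apply Rinv_0_lt_compat; lra|].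
    apply Rmult_le_compat_r; [left; apply Rinv_0_lt_compat; lra|]. lra. }
  assert (Hs0 : 0 <= s) by (unfold s; lra).
  assert (Hs1 : s <= l/2) by (unfold s; lra).
  assert (Hg0 : 0 <= g) by (unfold g; apply Rdiv_le_0_compat; lra).
  assert (Hg1 : g <= t/2).
  { unfold g, t. unfold Rdiv. rewrite Rmult_assoc, (Rmult_comm (/N)), <- Rmult_assoc.
    apply Rmult_le_compat_r; [left; apply Rinv_0_lt_compat; lra|]. lra. }
  destruct (key_poly u t g Hu0 Hu1 Ht0 Ht2 Hg0 Hg1) as [HX [HY0 [HY1 HPQ]]].
  set (X := u * (aa u t + g) * (1+2*u) / WW u) in *.
  set (Y := u * (bb u t + g) / WW u) in *.
  set (x := (N*(l+al) - A)/(N*(N+1))).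
  set (y := ((N+1)*(l+be) - A - (l+al))/((N+1)*(N+2))).
  set (aL := /N - (/N)^2/2 + (/N)^3/3 - (/N)^4/4) in *.
  set (bH := 2/N - (2/N)^2/2 + (2/N)^3/3) in *.
  assert (Ex : x - X = (al - aL)/(N+1)).
  { unfold x, X, aL, g, s, t, u, aa, WW. field. lra. }
  assert (Ey : Y - y = ((N+1)*(bH - be) + (al - aL))/((N+1)*(N+2))).
  { unfold y, Y, aL, bH, g, s, t, u, bb, WW. field. lra. }
  assert (HxX : X <= x).
  { assert (0 <= (al - aL)/(N+1)) by (apply Rdiv_le_0_compat; lra). lra. }
  assert (HyY : y <= Y).
  { assert (0 <= ((N+1)*(bH - be) + (al - aL))/((N+1)*(N+2))).
    { apply Rdiv_le_0_compat; [|nra]. nra. }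
    lra. }
  assert (H1 : exp (-x) <= exp (-X)).
  { destruct (Req_dec x X) as [->|]; [lra|]. left; apply exp_increasing; lra. }
  assert (H2 : exp y <= exp Y).
  { destruct (Req_dec y Y) as [->|]; [lra|]. left; apply exp_increasing; lra. }
  pose proof (E5 X HX). pose proof (Eup Y HY0 HY1).
  unfold Pp, Qq in HPQ. lra.
Qed.

Lemma INR_fact_S k : INR (fact (S k)) = (INR k + 1) * INR (fact k).
Proof. change (fact (S k)) with (S k * fact k)%nat. rewrite mult_INR, S_INR. reflexivity. Qed.

Lemma ln_fact_S k : ln (INR (fact (S k))) = ln (INR k + 1) + ln (INR (fact k)).
Proof. rewrite INR_fact_S. apply ln_mult. pose proof (pos_INR k). lra. apply INR_fact_lt_0. Qed.

Lemma ln_shift N v : 0 < N -> 0 <= v -> ln (N + v) = ln N + ln (1 + v/N).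
Proof. intros. rewrite <- ln_mult by (try apply Rplus_lt_le_0_compat; try lra; apply Rdiv_le_0_compat; lra).
  f_equal. field. lra. Qed.

Lemma stirling n : (1 <= n)%nat ->
  INR n * ln (INR n) - INR n + 1 <= ln (INR (fact n)) <= (INR n + /2) * ln (INR n) - INR n + 1.
Proof.
  induction n as [|n IH]; intros Hn; [lia|].
  destruct (Nat.eq_dec n 0) as [->|Hn0].
  - simpl. rewrite Rmult_1_l, ln_1. lra.
  - specialize (IH ltac:(lia)).
    assert (HN : 1 <= INR n) by (apply (le_INR 1); lia).
    rewrite ln_fact_S, S_INR.
    rewrite (ln_shift (INR n) 1) by lra.
    set (N := INR n) in *. set (l := ln N) in *. set (al := ln (1 + 1/N)).
    assert (Hv0 : 0 < 1/N) by (apply Rdiv_lt_0_compat; lra).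
    assert (Hv1 : 1/N <= 1) by (unfold Rdiv; rewrite Rmult_1_l; rewrite <- Rinv_1; apply Rinv_le_contravar; lra).
    pose proof (Ln2 (1/N) ltac:(lra)) as L2. pose proof (Ln3 (1/N) ltac:(lra)) as L3. fold al in L2, L3.
    assert (Nal1 : N * al <= 1).
    { assert (al <= 1/N) by nra.
      apply Rle_trans with (N*(1/N)); [apply Rmult_le_compat_l; lra | right; field; lra]. }
    assert (Nal2 : 1 <= (N + /2) * al).
    { apply Rle_trans with ((N + /2) * (2*(1/N)/(2+1/N))); [right; field; lra | apply Rmult_le_compat_l; lra]. }
    split; lra.
Qed.

Lemma ln_le_38 s : 0 < s -> ln s <= 3/8 * s.
Proof.
  intros Hs. pose proof (exp_ineq1_le (ln s - 1)) as H.
  unfold Rminus in H. rewrite exp_plus, exp_ln in H by lra.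
  pose proof (E5 1 ltac:(lra)) as H1.
  assert (exp (- (1)) <= 3/8) by lra.
  nra.
Qed.

Lemma ln_sq N : 1 <= N -> (ln N)^2 <= 9/16 * N.
Proof.
  intros HN. assert (Hs : 0 < sqrt N) by (apply sqrt_lt_R0; lra).
  assert (E : ln N = 2 * ln (sqrt N)).
  { rewrite <- (sqrt_sqrt N) at 1 by lra. rewrite ln_mult by lra. ring. }
  pose proof (ln_le_38 (sqrt N) Hs).
  assert (0 <= ln N) by (rewrite <- ln_1; apply ln_le; lra).
  assert (ln N <= 3/4 * sqrt N) by lra.
  pose proof (sqrt_sqrt N ltac:(lra)). nra.
Qed.

Lemma root_exp k x : 0 < x -> nth_root k x = exp (/ INR k * ln x).
Proof. intros. unfold nth_root, Rpower. reflexivity. Qed.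

Lemma big_case n : (8 <= n)%nat -> lalescu (S n) < lalescu n.
Proof.
  intros Hn. unfold lalescu.
  rewrite !root_exp by apply INR_fact_lt_0.
  rewrite !ln_fact_S, !S_INR.
  assert (HN : 8 <= INR n) by (replace 8 with (INR 8) by (simpl; lra); apply le_INR; lia).
  destruct (stirling n ltac:(lia)) as [St1 St2].
  set (N := INR n) in *. set (A := ln (INR (fact n))) in *.
  rewrite (ln_shift N 1) by lra. replace (N + 1 + 1) with (N + 2) by ring.
  rewrite (ln_shift N 2) by lra.
  set (l := ln N) in *. set (al := ln (1 + 1/N)). set (be := ln (1 + 2/N)).
  assert (Hv0 : 0 < 1/N) by (apply Rdiv_lt_0_compat; lra).
  assert (Hw0 : 0 < 2/N) by (apply Rdiv_lt_0_compat; lra).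
  pose proof (Ln1 (1/N) ltac:(lra)) as L1. pose proof (Ln2 (2/N) ltac:(lra)) as L2.
  fold al in L1. fold be in L2.
  assert (Hal : /N - (/N)^2/2 + (/N)^3/3 - (/N)^4/4 <= al) by (replace (/N) with (1/N) by (field; lra); lra).
  assert (Hl0 : 0 <= l) by (unfold l; rewrite <- ln_1; apply ln_le; lra).
  pose proof (core N l al be A HN Hl0 (ln_sq N ltac:(lra)) Hal L2 St1 St2) as C.
  set (x := (N*(l+al) - A)/(N*(N+1))) in C.
  set (y := ((N+1)*(l+be) - A - (l+al))/((N+1)*(N+2))) in C.
  set (m := / (N+1) * (l + al + A)).
  assert (E0 : / N * A = m + - x) by (unfold m, x; field; lra).
  assert (E2 : / (N + 2) * (l + be + (l + al + A)) = m + y) by (unfold m, y; field; lra).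
  rewrite E0, E2. rewrite !exp_plus.
  assert (0 < exp m) by apply exp_pos.
  nra.
Qed.

Lemma root_lt (k : nat) x p : (0 < k)%nat -> 0 < x -> 0 < p -> x < p^k -> nth_root k x < p.
Proof.
  intros Hk Hx Hp H. unfold nth_root, Rpower. rewrite <- (exp_ln p) by lra.
  apply exp_increasing.
  assert (HK : 0 < INR k) by (apply lt_0_INR; lia).
  assert (ln x < INR k * ln p) by (rewrite <- Rpower.ln_pow by lra; apply ln_increasing; lra).
  apply Rmult_lt_reg_l with (INR k); [lra|]. rewrite <- Rmult_assoc, Rinv_r, Rmult_1_l by lra. lra.
Qed.

Lemma root_gt (k : nat) x p : (0 < k)%nat -> 0 < x -> 0 < p -> p^k < x -> p < nth_root k x.
Proof.
  intros Hk Hx Hp H. unfold nth_root, Rpower. rewrite <- (exp_ln p) by lra.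
  apply exp_increasing.
  assert (HK : 0 < INR k) by (apply lt_0_INR; lia).
  assert (INR k * ln p < ln x) by (rewrite <- Rpower.ln_pow by lra; apply ln_increasing; [apply pow_lt|]; lra).
  apply Rmult_lt_reg_l with (INR k); [lra|]. rewrite <- Rmult_assoc, Rinv_r, Rmult_1_l by lra. lra.
Qed.


Lemma case1 : lalescu 2 < lalescu 1.
Proof.
  unfold lalescu.
  pose proof (root_lt 1 (INR (fact 1)) (10001/10000) ltac:(lia) (INR_fact_lt_0 _) ltac:(lra) ltac:(rewrite ?INR_fact_S; simpl; lra)).
  pose proof (root_lt 3 (INR (fact 3)) (18172/10000) ltac:(lia) (INR_fact_lt_0 _) ltac:(lra) ltac:(rewrite ?INR_fact_S; simpl; lra)).
  pose proof (root_gt 2 (INR (fact 2)) (14142/10000) ltac:(lia) (INR_fact_lt_0 _) ltac:(lra) ltac:(rewrite ?INR_fact_S; simpl; lra)).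
  lra.
Qed.


Lemma case2 : lalescu 3 < lalescu 2.
Proof.
  unfold lalescu.
  pose proof (root_lt 2 (INR (fact 2)) (14143/10000) ltac:(lia) (INR_fact_lt_0 _) ltac:(lra) ltac:(rewrite ?INR_fact_S; simpl; lra)).
  pose proof (root_lt 4 (INR (fact 4)) (22134/10000) ltac:(lia) (INR_fact_lt_0 _) ltac:(lra) ltac:(rewrite ?INR_fact_S; simpl; lra)).
  pose proof (root_gt 3 (INR (fact 3)) (18171/10000) ltac:(lia) (INR_fact_lt_0 _) ltac:(lra) ltac:(rewrite ?INR_fact_S; simpl; lra)).
  lra.
Qed.


Lemma case3 : lalescu 4 < lalescu 3.
Proof.
  unfold lalescu.
  pose proof (root_lt 3 (INR (fact 3)) (18172/10000) ltac:(lia) (INR_fact_lt_0 _) ltac:(lra) ltac:(rewrite ?INR_fact_S; simpl; lra)).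
  pose proof (root_lt 5 (INR (fact 5)) (26052/10000) ltac:(lia) (INR_fact_lt_0 _) ltac:(lra) ltac:(rewrite ?INR_fact_S; simpl; lra)).
  pose proof (root_gt 4 (INR (fact 4)) (22133/10000) ltac:(lia) (INR_fact_lt_0 _) ltac:(lra) ltac:(rewrite ?INR_fact_S; simpl; lra)).
  lra.
Qed.


Lemma case4 : lalescu 5 < lalescu 4.
Proof.
  unfold lalescu.
  pose proof (root_lt 4 (INR (fact 4)) (22134/10000) ltac:(lia) (INR_fact_lt_0 _) ltac:(lra) ltac:(rewrite ?INR_fact_S; simpl; lra)).
  pose proof (root_lt 6 (INR (fact 6)) (29938/10000) ltac:(lia) (INR_fact_lt_0 _) ltac:(lra) ltac:(rewrite ?INR_fact_S; simpl; lra)).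
  pose proof (root_gt 5 (INR (fact 5)) (26051/10000) ltac:(lia) (INR_fact_lt_0 _) ltac:(lra) ltac:(rewrite ?INR_fact_S; simpl; lra)).
  lra.
Qed.


Lemma case5 : lalescu 6 < lalescu 5.
Proof.
  unfold lalescu.
  pose proof (root_lt 5 (INR (fact 5)) (26052/10000) ltac:(lia) (INR_fact_lt_0 _) ltac:(lra) ltac:(rewrite ?INR_fact_S; simpl; lra)).
  pose proof (root_lt 7 (INR (fact 7)) (33801/10000) ltac:(lia) (INR_fact_lt_0 _) ltac:(lra) ltac:(rewrite ?INR_fact_S; simpl; lra)).
  pose proof (root_gt 6 (INR (fact 6)) (29937/10000) ltac:(lia) (INR_fact_lt_0 _) ltac:(lra) ltac:(rewrite ?INR_fact_S; simpl; lra)).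
  lra.
Qed.


Lemma case6 : lalescu 7 < lalescu 6.
Proof.
  unfold lalescu.
  pose proof (root_lt 6 (INR (fact 6)) (29938/10000) ltac:(lia) (INR_fact_lt_0 _) ltac:(lra) ltac:(rewrite ?INR_fact_S; simpl; lra)).
  pose proof (root_lt 8 (INR (fact 8)) (37644/10000) ltac:(lia) (INR_fact_lt_0 _) ltac:(lra) ltac:(rewrite ?INR_fact_S; simpl; lra)).
  pose proof (root_gt 7 (INR (fact 7)) (33800/10000) ltac:(lia) (INR_fact_lt_0 _) ltac:(lra) ltac:(rewrite ?INR_fact_S; simpl; lra)).
  lra.
Qed.


Lemma case7 : lalescu 8 < lalescu 7.
Proof.
  unfold lalescu.
  pose proof (root_lt 7 (INR (fact 7)) (33801/10000) ltac:(lia) (INR_fact_lt_0 _) ltac:(lra) ltac:(rewrite ?INR_fact_S; simpl; lra)).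
  pose proof (root_lt 9 (INR (fact 9)) (41472/10000) ltac:(lia) (INR_fact_lt_0 _) ltac:(lra) ltac:(rewrite ?INR_fact_S; simpl; lra)).
  pose proof (root_gt 8 (INR (fact 8)) (37643/10000) ltac:(lia) (INR_fact_lt_0 _) ltac:(lra) ltac:(rewrite ?INR_fact_S; simpl; lra)).
  lra.
Qed.
Theorem mainTheorem1 : forall n : nat, (1 <= n)%nat -> lalescu (S n) < lalescu n.
Proof.
  intros n Hn.
  destruct (Nat.le_gt_cases 8 n) as [H|H]; [apply big_case; exact H|].
  destruct n as [|[|[|[|[|[|[|[|n]]]]]]]]; try lia.
  - exact case1. - exact case2. - exact case3. - exact case4.
  - exact case5. - exact case6. - exact case7.
Qed.
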